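(* Let $n\ge1$ and let $R$ be a plane tree with $n+1$ internal nodes and $n+1$ leaves in which every internal node has a leaf as its first (leftmost) child, equipped with an integer labeling $\ell$ of its leaves. Then $(R,\ell)$ is a decorated tree if and only if $\mathrm{Ctr}(R)$ is a sticky tree. Consequently $\mathrm{Ctr}$ is a bijection from $\mathcal{RS}_n$ to $\mathcal{S}_n$.
   Context: Plane trees: a plane tree is a rooted tree in which the children of every node are linearly ordered (left to right); the root has depth $0$, a child of a node of depth $d$ has depth $d+1$; a leaf is a node without children, an internal node is a node with at least one child. The prefix order is: the root, followed by the prefix order of the subtree of its leftmost child, then of its second child, and so on. $R_u$ (or $S_u$) denotes the subtree rooted at $u$. Sticky trees: a sticky tree is a plane tree $S$ with node set $V$ and a labeling $\ell:V\to\mathbb{N}$ such that: (1) every node $u$ of depth $d$ has $0\le\ell(u)\le d$; (2) every node $u$ of depth $d>0$ has some $v\in S_u$ (possibly $v=u$) with $\ell(v)<d$; (3) for every node $u$ of depth $d$, if some $v\in S_u$ has $\ell(v)=d$, then every node of $S_u$ (including $u$) preceding $v$ in prefix order has label at least $d$. $\mathcal{S}_n$ is the set of sticky trees with $n$ edges. Decorated trees: a decorated tree is a plane tree $R$ with an integer labeling $\ell$ defined only on its leaves such that: (1') for every leaf $f$ whose parent has depth $d$, $-1\le\ell(f)\le d-1$; (2') every internal node $u$ of depth $d>0$ has a descendant leaf $f$ with $\ell(f)<d-1$; (3') for every node $t$ of depth $d$ and every child $u$ of $t$, if some leaf $f$ of $R_u$ has $\ell(f)=d$, then every leaf of $R_u$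 preceding $f$ in prefix order has label at least $d$. $\mathcal{RS}_n$ is the set of decorated trees with $n+1$ internal nodes and $n+1$ leaves in which every internal node has a leaf as its first child. The map $\mathrm{Ctr}$: for $R$ as in the claim (so each leaf is the first child of its parent and leaves are in bijection with internal nodes), $\mathrm{Ctr}(R)$ is the plane tree obtained by deleting all leaves of $R$, where each remaining (formerly internal) node $w$ receives the label $\ell(f)+1$, $f$ being the leaf that was the first child of $w$. *)

(* Defs.v *)
From HB Require Import structures.
From mathcomp Require Import all_boot all_order all_algebra.
From Stdlib Require List.
Set Implicit Arguments. Unset Strict Implicit. Unset Printing Implicit Defensive.
Import Order.TTheory GRing.Theory Num.Theory.
Local Open Scope ring_scope.

Inductive dtree := DLeaf of int | DNode of seq dtree.

(* ---------- Plane trees with a label on every node (for sticky trees) ----------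
   Labels are taken in int; condition (1) of sticky trees forces them to be >= 0,
   i.e. natural numbers. *)
Inductive stree := SNode of int & seq stree.

Definition dchildren (t : dtree) : seq dtree := if t is DNode ts then ts else [::].

Fixpoint dnodes (d : nat) (t : dtree) : seq (nat * dtree) :=
  match t with
  | DLeaf _ => [:: (d, t)]
  | DNode ts => (d, t) :: flatten (map (dnodes d.+1) ts)
  end.

Fixpoint dleaves (t : dtree) : seq int :=
  match t with
  | DLeaf z => [:: z]
  | DNode ts => flatten (map dleaves ts)
  end.

Definition is_internal (t : dtree) : bool := if t is DNode _ then true else false.

Definition n_internal (R : dtree) : nat := count (fun p => is_internal p.2) (dnodes 0 R).
Definition n_leaves (R : dtree) : nat := size (dleaves R).

Definition first_child_leaf (R : dtree) : Prop :=
  forall d t, List.In (d, t) (dnodes 0 R) ->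
    match t with
    | DNode (DLeaf _ :: _) => True
    | DNode _ => False
    | DLeaf _ => True
    end.

Definition prefix_cond (s : seq int) (d : int) : Prop :=
  forall i j, (j < i)%N -> (i < size s)%N -> nth 0 s i = d -> d <= nth 0 s j.

Definition decorated (R : dtree) : Prop :=
  (forall d t, List.In (d, t) (dnodes 0 R) ->
     forall z, List.In (DLeaf z) (dchildren t) -> (-1 <= z) && (z <= d%:Z - 1)) /\
  (forall d ts, List.In (d, DNode ts) (dnodes 0 R) -> (0 < d)%N ->
     has (fun z => z < d%:Z - 1) (dleaves (DNode ts))) /\
  (forall d t, List.In (d, t) (dnodes 0 R) ->
     forall u, List.In u (dchildren t) -> prefix_cond (dleaves u) d%:Z).

Definition in_RS (n : nat) (R : dtree) : Prop :=
  [/\ first_child_leaf R, n_internal R = n.+1, n_leaves R = n.+1 & decorated R].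

Fixpoint snodes (d : nat) (t : stree) : seq (nat * stree) :=
  match t with
  | SNode _ ts => (d, t) :: flatten (map (snodes d.+1) ts)
  end.

Fixpoint slabels (t : stree) : seq int :=
  match t with
  | SNode l ts => l :: flatten (map slabels ts)
  end.

Definition slabel (t : stree) : int := let: SNode l _ := t in l.

Definition n_edges (S : stree) : nat := (size (snodes 0 S)).-1.

Definition sticky (S : stree) : Prop :=
  (forall d u, List.In (d, u) (snodes 0 S) -> (0 <= slabel u) && (slabel u <= d%:Z)) /\
  (forall d u, List.In (d, u) (snodes 0 S) -> (0 < d)%N ->
     has (fun l => l < d%:Z) (slabels u)) /\
  (forall d u, List.In (d, u) (snodes 0 S) -> prefix_cond (slabels u) d%:Z).

Definition in_S (n : nat) (S : stree) : Prop := sticky S /\ n_edges S = n.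

(* On inputs outside the intended domain (a leaf, or an
   internal node whose first child is not a leaf) some arbitrary value is returned. *)
Fixpoint ctr (t : dtree) : stree :=
  match t with
  | DLeaf z => SNode (z + 1) [::]
  | DNode ts =>
      match ts with
      | DLeaf z :: rest => SNode (z + 1) (map ctr rest)
      | _ => SNode 0 (map ctr ts)
      end
  end.

(* Main.v *)
Require Import Defs.
From HB Require Import structures.
From mathcomp Require Import all_boot all_order all_algebra zify.
Set Implicit Arguments. Unset Strict Implicit. Unset Printing Implicit Defensive.
Import Order.TTheory GRing.Theory Num.Theory.
Local Open Scope ring_scope.

Definition dtree_ind' (P : dtree -> Prop) (HL : forall z, P (DLeaf z))
  (HN : forall ts, (forall t, List.In t ts -> P t) -> P (DNode ts)) : forall t, P t :=
  fix F t := match t with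
  | DLeaf z => HL z
  | DNode ts => HN ts ((fix G ts : forall t, List.In t ts -> P t :=
       match ts with
       | nil => fun t H => False_ind _ H
       | c :: cs => fun t H => match H with
                    | or_introl e => eq_ind c P (F c) t e
                    | or_intror H' => G cs t H' end
       end) ts)
  end.

Definition stree_ind' (P : stree -> Prop)
  (HN : forall l ts, (forall t, List.In t ts -> P t) -> P (SNode l ts)) : forall t, P t :=
  fix F t := match t with
  | SNode l ts => HN l ts ((fix G ts : forall t, List.In t ts -> P t :=
       match ts with
       | nil => fun t H => False_ind _ H
       | c :: cs => fun t H => match H with
                    | or_introl e => eq_ind c P (F c) t e
                    | or_intror H' => G cs t H' end
       end) ts)
  end.

Lemma in_cat (T : Type) (x : T) s1 s2 : List.In x (s1 ++ s2) <-> List.In x s1 \/ List.In x s2.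
Proof. elim: s1 => [|a s IH] /=; first by tauto. rewrite IH; tauto. Qed.

Lemma in_flat (A T : Type) (f : A -> seq T) x ts :
  List.In x (flatten (map f ts)) <-> exists t, List.In t ts /\ List.In x (f t).
Proof.
elim: ts => [|a s IH] /=; first by split=> // -[t []].
rewrite in_cat IH; split.
- by case=> [H|[t [H1 H2]]]; [exists a; auto | exists t; auto].
- by case=> t [[<-|H1] H2]; [left | right; exists t].
Qed.

Lemma in_mapP (A B : Type) (f : A -> B) y s :
  List.In y (map f s) <-> exists x, List.In x s /\ y = f x.
Proof.
elim: s => [|a s IH] /=; first by split=> // -[t []].
rewrite IH; split.
- by case=> [<-|[x [H1 ->]]]; [exists a; auto | exists x; auto].
- by case=> x [[<-|H1] ->]; [left | right; exists x].
Qed.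

Lemma map_ext_In (A B : Type) (f g : A -> B) s :
  (forall x, List.In x s -> f x = g x) -> map f s = map g s.
Proof. elim: s => //= a s IH H; rewrite H ?IH //; auto. Qed.

Lemma inP_list (T : eqType) (x : T) s : x \in s -> List.In x s.
Proof. elim: s => //= a s IH; rewrite in_cons => /orP [/eqP ->|/IH]; auto. Qed.

Fixpoint unctr (s : stree) : dtree :=
  let: SNode l ts := s in DNode (DLeaf (l - 1) :: map unctr ts).

Definition schildren (s : stree) := let: SNode _ ts := s in ts.

Lemma ctr_unctr s : ctr (unctr s) = s.
Proof.
elim/stree_ind': s => l ts IH /=; rewrite subrK -map_comp.
congr SNode; rewrite -[RHS]map_id; apply: map_ext_In => x /IH //.
Qed.

Lemma dleaves_unctr s : dleaves (unctr s) = map (fun x => x - 1) (slabels s).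
Proof.
elim/stree_ind': s => l ts IH /=; congr cons.
rewrite map_flatten -!map_comp; congr flatten; apply: map_ext_In => x /IH //.
Qed.

Fixpoint nint (t : dtree) : nat :=
  match t with DLeaf _ => 0%N | DNode ts => (sumn (map nint ts)).+1 end.
Definition nlv t := size (dleaves t).

Lemma nint_count d t : count (fun p => is_internal p.2) (dnodes d t) = nint t.
Proof.
elim/dtree_ind': t d => [z|ts IH] d //=.
rewrite count_flatten -map_comp; congr (_.+1)%N; congr sumn.
apply: map_ext_In => x Hx /=; exact: IH.
Qed.

Lemma nlv_node ts : nlv (DNode ts) = sumn (map nlv ts).
Proof. by rewrite /nlv /= size_flatten /shape -map_comp. Qed.

Fixpoint ssz (s : stree) : nat := let: SNode _ ts := s in (sumn (map ssz ts)).+1.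

Lemma size_snodes d s : size (snodes d s) = ssz s.
Proof.
elim/stree_ind': s d => l ts IH d /=.
rewrite size_flatten /shape -map_comp; congr (_.+1)%N; congr sumn.
apply: map_ext_In => x Hx /=; exact: IH.
Qed.

Lemma size_slabels s : size (slabels s) = ssz s.
Proof.
elim/stree_ind': s => l ts IH /=.
rewrite size_flatten /shape -map_comp; congr (_.+1)%N; congr sumn.
apply: map_ext_In => x /IH //.
Qed.

Lemma nint_unctr s : nint (unctr s) = ssz s.
Proof.
elim/stree_ind': s => l ts IH /=; rewrite -map_comp; congr (_.+1)%N; congr sumn.
apply: map_ext_In => x /IH //.
Qed.

Lemma nlv_unctr s : nlv (unctr s) = ssz s.
Proof. by rewrite /nlv dleaves_unctr size_map size_slabels. Qed.

Lemma memA s d e t : List.In (e, t) (dnodes d (unctr s)) ->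
  (exists u, List.In (e, u) (snodes d s) /\ t = unctr u) \/ (exists z, t = DLeaf z).
Proof.
elim/stree_ind': s d => l ts IH d /=.
case=> [[-> <-]|[[-> <-]|]]; first by left; exists (SNode l ts); auto.
- by right; exists (l - 1).
rewrite -map_comp => /in_flat [c [Hc Hin]].
case: (IH c Hc d.+1 Hin) => [[u [Hu ->]]|]; last by right.
left; exists u; split=> //; right; apply/in_flat; exists c; auto.
Qed.

Lemma memB s d e u : List.In (e, u) (snodes d s) -> List.In (e, unctr u) (dnodes d (unctr s)).
Proof.
elim/stree_ind': s d => l ts IH d /=.
case=> [[-> <-]|]; first by left.
move=> /in_flat [c [Hc Hin]]; right; right.
rewrite -map_comp; apply/in_flat; exists c; split=> //; exact: IH.
Qed.

Lemma memC s d e u w : List.In (e, u) (snodes d s) -> List.In w (schildren u) ->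
  List.In (e.+1, w) (snodes d s).
Proof.
elim/stree_ind': s d => l ts IH d /=.
case=> [[-> <-]|] /=.
- move=> Hw; right; apply/in_flat; exists w; split=> //; case: w {Hw IH} => /= ? ?; auto.
move=> /in_flat [c [Hc Hin]] Hw; right; apply/in_flat; exists c; split=> //.
exact: IH Hin Hw.
Qed.

Lemma memD s d e w : List.In (e, w) (snodes d s) ->
  (e = d /\ w = s) \/ exists e' u, e = e'.+1 /\ List.In (e', u) (snodes d s) /\ List.In w (schildren u).
Proof.
elim/stree_ind': s d => l ts IH d /=.
case=> [[-> <-]|]; first by left.
move=> /in_flat [c [Hc Hin]]; right.
case: (IH c Hc d.+1 Hin) => [[-> ->]|[e' [u [-> [Hu Hw]]]]].
- by exists d, (SNode l ts); split=> //; split=> //; left.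
exists e', u; split=> //; split=> //; right; apply/in_flat; exists c; auto.
Qed.

Lemma memE s d x : List.In x (slabels s) -> exists e u, List.In (e, u) (snodes d s) /\ slabel u = x.
Proof.
elim/stree_ind': s d => l ts IH d /=.
case=> [<-|]; first by exists d, (SNode l ts); split=> //; left.
move=> /in_flat [c [Hc Hin]].
case: (IH c Hc d.+1 Hin) => e [u [Hu Hl]].
exists e, u; split=> //; right; apply/in_flat; exists c; auto.
Qed.

Lemma prefix_map s d d' : d' = d + 1 ->
  prefix_cond (map (fun x => x - 1) s) d <-> prefix_cond s d'.
Proof.
move=> ->; rewrite /prefix_cond size_map; split=> H i j ji iS.
- move=> Hi; have := H i j ji iS; rewrite !(nth_map 0) //; last exact: ltn_trans ji iS.
  move=> /(_ _); rewrite Hi => /(_ (addrK _ _)) => h; by rewrite -lerBrDr.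
- rewrite !(nth_map 0) //; last exact: ltn_trans ji iS.
  move=> Hi; have := H i j ji iS; rewrite -Hi subrK => /(_ erefl) => h; by rewrite lerD2r.
Qed.

Definition fclP (t : dtree) : Prop :=
  match t with DNode (DLeaf _ :: _) => True | DNode _ => False | DLeaf _ => True end.

Lemma sum_le (A : Type) (f g : A -> nat) s : (forall x, List.In x s -> (f x <= g x)%N) ->
  (sumn (map f s) <= sumn (map g s))%N /\
  (sumn (map f s) = sumn (map g s) -> forall x, List.In x s -> f x = g x).
Proof.
elim: s => [|a s IH] H //=; split => //.
have [h1 h2] := IH (fun x hx => H x (or_intror hx)).
have ha := H a (or_introl erefl).
- exact: leq_add.
have [h1 h2] := IH (fun x hx => H x (or_intror hx)).
have ha := H a (or_introl erefl).
move=> E x [<-|hx]; first lia.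
apply: h2 => //; lia.
Qed.

Lemma struct R d : (forall e t, List.In (e, t) (dnodes d R) -> fclP t) ->
  (nint R <= nlv R)%N /\ (nint R = nlv R -> R = unctr (ctr R)).
Proof.
elim/dtree_ind': R d => [z|ts IH] d H; first by [].
have := H d (DNode ts) (or_introl erefl).
case: ts IH H => [|[z|ts'] rest] IH H //= _.
have IHc : forall c, List.In c rest ->
    (nint c <= nlv c)%N /\ (nint c = nlv c -> c = unctr (ctr c)).
  move=> c Hc; apply: (IH c (or_intror Hc) d.+1) => e t Ht; apply: (H e t).
  right; apply/in_flat; exists c; split; [by right | exact: Ht].
have [h1 h2] := sum_le (fun x hx => (IHc x hx).1).
rewrite nlv_node /= (_ : nlv (DLeaf z) = 1%N) //; split; first by lia.
move=> E; rewrite addrK -map_comp; congr DNode; congr cons.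
rewrite -[LHS]map_id; apply: map_ext_In => x hx /=.
apply: (IHc x hx).2; apply: h2 => //; lia.
Qed.

Lemma dec_sticky S : decorated (unctr S) <-> sticky S.
Proof.
have chU : forall l ts, dchildren (unctr (SNode l ts)) = DLeaf (l - 1) :: map unctr ts by [].
split.
- case=> [D1 [D2 D3]].
  have S1 : forall d u, List.In (d, u) (snodes 0 S) -> (0 <= slabel u) && (slabel u <= d%:Z).
    move=> d [l ts] Hu; have := D1 _ _ (memB Hu) (l - 1).
    rewrite chU => /(_ (or_introl erefl)) /andP [h1 h2] /=.
    by move: h1 h2; rewrite lerBrDr lerBlDr subrK addNr => -> ->.
  split=> //; split.
  + move=> d [l ts] Hu dpos; have := D2 _ _ (memB Hu) dpos.
    rewrite -/(unctr (SNode l ts)) dleaves_unctr has_map; apply: sub_has => x /=.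
    by rewrite ltrD2r.
  + move=> d w Hw; case: (memD Hw) => [[-> ->]|[e' [u [-> [Hu Hc]]]]].
    * move=> i j ji iS _; have jS : (j < size (slabels S))%N by exact: ltn_trans ji iS.
      have := memE 0 (inP_list (mem_nth 0 jS)) => -[e [u [Hu' <-]]].
      by case/andP: (S1 _ _ Hu').
    * have := D3 _ _ (memB Hu) (unctr w); case: u Hu Hc => l ts Hu Hc.
      rewrite chU => /(_ (or_intror _)) H.
      have := H (proj2 (in_mapP _ _ _) (ex_intro _ w (conj Hc erefl))).
      by rewrite dleaves_unctr (prefix_map _ (d' := e'.+1%:Z)) // -addn1 PoszD.
- case=> [S1 [S2 S3]]; split; [|split].
  + move=> d t Ht z Hz; case: (memA Ht) => [[[l ts] [Hu Et]]|[z' Et]]; last by rewrite Et in Hz.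
    move: Hz; rewrite Et chU => -[[<-]|/in_mapP [[l' ts'] [_ //]]].
    have /andP [h1 h2] := S1 _ _ Hu; rewrite /= in h1 h2.
    by rewrite lerBrDr addNr h1 lerD2r h2.
  + move=> d ts Ht dpos; case: (memA Ht) => [[u [Hu Et]]|[z' //]].
    rewrite Et dleaves_unctr has_map; have := S2 _ _ Hu dpos; apply: sub_has => x /=.
    by rewrite ltrD2r.
  + move=> d t Ht u' Hu'; case: (memA Ht) => [[[l ts] [Hu Et]]|[z' Et]]; last by rewrite Et in Hu'.
    move: Hu'; rewrite Et chU => -[<-|/in_mapP [w [Hw ->]]].
    * by move=> i j ji /= iS; lia.
    * have := S3 _ _ (memC Hu Hw); rewrite dleaves_unctr (prefix_map _ (d' := d.+1%:Z)) //.
      by rewrite -addn1 PoszD.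
Qed.

Theorem proposition4p2 (n : nat) : (1 <= n)%N ->
  (forall R : dtree,
     first_child_leaf R -> n_internal R = n.+1 -> n_leaves R = n.+1 ->
     (decorated R <-> sticky (ctr R))) /\
  (forall R : dtree, in_RS n R -> in_S n (ctr R)) /\
  (forall R1 R2 : dtree, in_RS n R1 -> in_RS n R2 -> ctr R1 = ctr R2 -> R1 = R2) /\
  (forall S : stree, in_S n S -> exists R : dtree, in_RS n R /\ ctr R = S).
Proof.
move=> _.
have key : forall R, first_child_leaf R -> n_internal R = n.+1 -> n_leaves R = n.+1 ->
    R = unctr (ctr R).
  move=> R F Hi Hl; have [_ h] := @struct R 0 F; apply: h.
  have e1 : nint R = n.+1 by rewrite -(nint_count 0).
  have e2 : nlv R = n.+1 by [].
  by rewrite e1 e2.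
have P1 : forall R : dtree,
     first_child_leaf R -> n_internal R = n.+1 -> n_leaves R = n.+1 ->
     (decorated R <-> sticky (ctr R)).
  by move=> R F Hi Hl; rewrite {1}(key R F Hi Hl); exact: dec_sticky.
split => //; split; [|split].
- move=> R [F Hi Hl D]; split; first by apply/(P1 R F Hi Hl).
  rewrite /n_edges size_snodes -nint_unctr -(key R F Hi Hl).
  by rewrite -(nint_count 0) -/(n_internal R) Hi.
- move=> R1 R2 [F1 Hi1 Hl1 _] [F2 Hi2 Hl2 _] E.
  by rewrite (key R1 F1 Hi1 Hl1) (key R2 F2 Hi2 Hl2) E.
- move=> S [St Ne]; exists (unctr S); rewrite ctr_unctr; split=> //.
  have Hs : ssz S = n.+1.
    move: Ne; rewrite /n_edges size_snodes; case: S {St} => l ts /= <- //.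
  split.
  + move=> d t Ht; case: (memA Ht) => [[[l ts] [_ ->]]|[z ->]] //.
  + by rewrite /n_internal nint_count nint_unctr.
  + by rewrite -Hs -nlv_unctr.
  + exact/dec_sticky.
Qed.
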